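(* For a $K$-armed bandit with rewards $r\in\mathbb{R}^K$, a full-support softmax policy $\pi=\pi_\theta$, temperature $\eta>0$ and step size $\alpha>0$, let $\theta'(a)=\theta(a)+\alpha w(a)U(a)$ and $\pi'=\pi_{\theta'}$. Then, with $V=\pi^\top r$, $V'=\pi'^\top r$ and $Z=\sum_{a'}\pi(a')e^{\alpha w(a')U(a')}$, \[ V'-V=\frac1Z\sum_{a=1}^K\pi(a)U(a)\big(e^{\alpha w(a)U(a)}-1\big)\;\ge\;0. \]
   Context: $\pi_\theta(a)=e^{\theta(a)}/\sum_{a'}e^{\theta(a')}$; $U(a):=r(a)-\pi^\top r$; $\ell(a):=-\log\pi(a)$; DG gate $w(a):=\sigma(U(a)\ell(a)/\eta)$ with $\sigma(x)=1/(1+e^{-x})$. *)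

(* Defs.v *)
From HB Require Import structures.
From mathcomp Require Import all_boot all_order all_algebra.
From mathcomp Require Import all_classical all_reals all_analysis.
Set Implicit Arguments. Unset Strict Implicit. Unset Printing Implicit Defensive.
Import Order.TTheory GRing.Theory Num.Theory.
Local Open Scope ring_scope.

Section Defs.
Variables (R : realType) (K : nat).

Definition softmax (theta : 'I_K -> R) (a : 'I_K) : R :=
  expR (theta a) / \sum_(a' < K) expR (theta a').

Definition value (pi r : 'I_K -> R) : R := \sum_(a < K) pi a * r a.

Definition adv (theta r : 'I_K -> R) (a : 'I_K) : R :=
  r a - value (softmax theta) r.

Definition surprisal (theta : 'I_K -> R) (a : 'I_K) : R :=
  - ln (softmax theta a).

Definition sigmoid (x : R) : R := 1 / (1 + expR (- x)).

Definition gate (eta : R) (theta r : 'I_K -> R) (a : 'I_K) : R :=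
  sigmoid (adv theta r a * surprisal theta a / eta).

Definition dg_update (alpha eta : R) (theta r : 'I_K -> R) (a : 'I_K) : R :=
  theta a + alpha * gate eta theta r a * adv theta r a.

End Defs.

(* Main.v *)
Require Import Defs.
From HB Require Import structures.
From mathcomp Require Import all_boot all_order all_algebra.
From mathcomp Require Import all_classical all_reals all_analysis.
From mathcomp Require Import ring lra.
Import Order.TTheory GRing.Theory Num.Theory.
Local Open Scope ring_scope.

Theorem lemma8 (R : realType) (K : nat) (hK : (0 < K)%N)
    (r theta : 'I_K -> R) (eta alpha : R) (heta : 0 < eta) (halpha : 0 < alpha) :
  let pi := softmax theta in
  let U := adv theta r in
  let w := gate eta theta r in
  let pi' := softmax (dg_update alpha eta theta r) in
  let V := value pi r in
  let V' := value pi' r in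
  let Z := \sum_(a' < K) pi a' * expR (alpha * w a' * U a') in
  V' - V = Z^-1 * \sum_(a < K) pi a * U a * (expR (alpha * w a * U a) - 1)
  /\ 0 <= Z^-1 * \sum_(a < K) pi a * U a * (expR (alpha * w a * U a) - 1).
Proof.
move=> pi U w pi' V V' Z.
set c := fun a => alpha * w a * U a.
have posS : forall f : 'I_K -> R, (forall a, 0 < f a) -> 0 < \sum_(a < K) f a.
  move=> f hf; rewrite (bigD1 (Ordinal hK)) //=.
  apply: ltr_wpDr; last exact: hf.
  by apply: sumr_ge0 => i _; apply/ltW.
set S := \sum_(a' < K) expR (theta a').
have hS : 0 < S by apply: posS => a; exact: expR_gt0.
have hpi : forall a, 0 < pi a.
  by move=> a; rewrite /pi /softmax divr_gt0 // expR_gt0.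
have hZ : 0 < Z by apply: posS => a; rewrite mulr_gt0 // expR_gt0.
have hsum1 : \sum_(a < K) pi a = 1.
  rewrite /pi /softmax -mulr_suml -/S mulfV //; exact: lt0r_neq0.
have hT : \sum_(b < K) expR (dg_update alpha eta theta r b)
          = S * Z.
  rewrite /Z /S mulr_sumr; apply: eq_bigr => b _.
  rewrite /dg_update expRD /pi /softmax -/S -/(w b) -/(U b).
  field; exact: lt0r_neq0.
have hpi' : forall a, pi' a = pi a * expR (c a) / Z.
  move=> a; rewrite /pi' /softmax hT /dg_update expRD /pi /softmax -/S.
  rewrite -/(w a) -/(U a) /c.
  field; apply/andP; split; exact: lt0r_neq0.
have hsumeq : \sum_(a < K) pi a * U a * (expR (alpha * w a * U a) - 1)
     = \sum_(a < K) pi a * expR (c a) * r a - value pi r * Z.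
  rewrite (eq_bigr (fun a => (pi a * expR (c a) * r a - value pi r * (pi a * expR (c a)))
                       - (pi a * r a - value pi r * pi a))); last first.
    by move=> a _; rewrite /U /adv -/pi /c; ring.
  rewrite !sumrB -!mulr_sumr hsum1 /Z /value -/c; ring.
have hV' : V' = Z^-1 * \sum_(a < K) pi a * expR (c a) * r a.
  rewrite /V' /value mulr_sumr; apply: eq_bigr => a _.
  rewrite hpi'; field; exact: lt0r_neq0.
split.
  rewrite hsumeq hV' /V; field; exact: lt0r_neq0.
apply: mulr_ge0; first by rewrite invr_ge0 ltW.
apply: sumr_ge0 => a _.
rewrite -mulrA; apply: mulr_ge0; first exact: ltW.
have hw : 0 < w a by rewrite /w /gate /sigmoid divr_gt0 // ltr_wpDr // expR_gt0.
have [hU|hU] := leP 0 (U a).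
  apply: mulr_ge0 => //; rewrite subr_ge0 -expR0 ler_expR.
  by apply: mulr_ge0 => //; apply: mulr_ge0; apply: ltW.
apply: mulr_le0 ; first exact: ltW.
rewrite subr_le0 -[X in _ <= X]expR0 ler_expR.
apply: mulr_ge0_le0; first by apply: mulr_ge0; apply: ltW.
exact: ltW.
Qed.
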